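(* Let $N\ge1$, $\lambda_0,\dots,\lambda_N>0$ and $\gamma_0,\dots,\gamma_N\in\mathbb{C}$ distinct, and let $$p(\eta,\zeta)=\sum_{i=0}^N\lambda_i^2\prod_{\substack{j=0\\ j\neq i}}^N(\zeta-\gamma_j)(1+\eta\bar\gamma_j)$$ be the polynomial defining the spectral curve of the corresponding JNR monopole. Then the holomorphic sphere of this JNR monopole is (up to the action of $U(N+1)$) $$q(z)=\Big[\frac{\lambda_0}{z-\gamma_0}:\frac{\lambda_1}{z-\gamma_1}:\cdots:\frac{\lambda_N}{z-\gamma_N}\Big],$$ i.e. $q:\mathbb{P}^1\to\mathbb{P}^N$ is a full holomorphic map of degree $N$, and its lift $\tilde q(z)=\big(\lambda_i\prod_{j\neq i}(z-\gamma_j)\big)_{i=0}^N$ satisfies $$\langle\tilde q(-1/\bar\eta),\tilde q(\zeta)\rangle=\frac{(-1)^N}{\eta^N}\,p(\eta,\zeta).$$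
   Context: $\langle\cdot,\cdot\rangle$ is the standard Hermitian inner product on $\mathbb{C}^{N+1}$, conjugate-linear in the first factor. A holomorphic map $q:\mathbb{P}^1\to\mathbb{P}^N$ is full if its image is not contained in a proper projective subspace. For a charge $N$ hyperbolic monopole whose spectral curve is defined by a polynomial $p$ normalized so that $p(\eta,\zeta)=(-1)^N\eta^N\zeta^N\overline{p(-1/\bar\zeta,-1/\bar\eta)}$ and $p(-1/\bar\zeta,\zeta)\bar\zeta^N>0$ (the JNR polynomial above satisfies these), the holomorphic sphere (Murray–Norbury–Singer) is the degree $N$ full holomorphic map $q:\mathbb{P}^1\to\mathbb{P}^N$, unique up to the action of $U(N+1)$, admitting a polynomial lift $\tilde q$ with $\langle\tilde q(-1/\bar\eta),\tilde q(\zeta)\rangle=(-1)^N\eta^{-N}p(\eta,\zeta)$; its pullback of the Kähler form of $\mathbb{P}^N$ is the curvature of the limiting connection at infinity. *)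

(* Defs.v *)
From mathcomp Require Import all_boot all_algebra.
From mathcomp Require Export reals complex.
Set Implicit Arguments. Unset Strict Implicit. Unset Printing Implicit Defensive.
Import GRing.Theory Num.Theory.
Local Open Scope ring_scope.
Local Open Scope complex_scope.

Definition herm (R : realType) (n : nat) (u v : 'I_n -> R[i]) : R[i] :=
  \sum_(i < n) (u i)^* * v i.

Definition jnr_p (R : realType) (N : nat) (lam : 'I_N.+1 -> R)
    (gam : 'I_N.+1 -> R[i]) (eta zeta : R[i]) : R[i] :=
  \sum_(i < N.+1) ((lam i)%:C ^+ 2 *
     \prod_(j < N.+1 | j != i) ((zeta - gam j) * (1 + eta * (gam j)^*))).

(* Polynomial lift  q~_i(z) = lam_i prod_{j<>i} (z - gam_j)  of
   q(z) = [lam_0/(z-gam_0) : ... : lam_N/(z-gam_N)]. *)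
Definition jnr_lift (R : realType) (N : nat) (lam : 'I_N.+1 -> R)
    (gam : 'I_N.+1 -> R[i]) : 'I_N.+1 -> {poly R[i]} :=
  fun i => (lam i)%:C *: \prod_(j < N.+1 | j != i) ('X - (gam j)%:P).

Definition lift_eval (R : realType) (n : nat) (Q : 'I_n -> {poly R[i]})
    (z : R[i]) : 'I_n -> R[i] := fun i => (Q i).[z].

(* A polynomial lift Q : C -> C^(n) (components of degree <= d) defines a
   holomorphic map P^1 -> P^(n-1) of degree d when the components have no
   common zero on C and their z^d-coefficients are not all zero (so the map is
   defined at infinity, with value the vector of z^d-coefficients). *)
Definition poly_map_of_degree (R : realType) (n : nat) (Q : 'I_n -> {poly R[i]})
    (d : nat) : Prop :=
  (forall i, (size (Q i) <= d.+1)%N) /\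
  (exists i, (size (Q i) == d.+1)%N) /\
  (forall z : R[i], exists i, (Q i).[z] != 0).

(* Full: the image is not contained in a proper projective subspace, i.e. in
   no hyperplane {sum_i a_i w_i = 0} with a <> 0.  (The point at infinity is a
   limit of finite points, so it suffices to test finite points.) *)
Definition full_map (R : realType) (n : nat) (Q : 'I_n -> {poly R[i]}) : Prop :=
  forall a : 'I_n -> R[i],
    (forall z : R[i], \sum_(i < n) a i * (Q i).[z] = 0) -> forall i, a i = 0.

(* Main.v *)
Require Import Defs.
From mathcomp Require Import all_boot all_algebra.
From mathcomp Require Import reals complex.
From mathcomp Require Import ring.
Import GRing.Theory Num.Theory.
Local Open Scope ring_scope.
Local Open Scope complex_scope.

Lemma card_neq (N : nat) (i : 'I_N.+1) : #|[pred j : 'I_N.+1 | j != i]| = N.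
Proof. by have := cardC1 i; rewrite card_ord. Qed.

Lemma size_P (R : realType) (N : nat) (gam : 'I_N.+1 -> R[i]) (i : 'I_N.+1) :
  size (\prod_(j < N.+1 | j != i) ('X - (gam j)%:P)) = N.+1.
Proof.
rewrite size_prod; last by move=> j _; rewrite polyXsubC_eq0.
rewrite (eq_bigr (fun _ => 2%N)); last by move=> j _; rewrite size_XsubC.
rewrite sum_nat_const.
have -> : #|[pred j : 'I_N.+1 | j != i]| = N by apply: card_neq.
by rewrite muln2 -addnn -addSn addnK.
Qed.

Lemma eval_lift (R : realType) (N : nat) (lam : 'I_N.+1 -> R)
    (gam : 'I_N.+1 -> R[i]) i z :
  (jnr_lift lam gam i).[z] = (lam i)%:C * \prod_(j < N.+1 | j != i) (z - gam j).
Proof.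
by rewrite /jnr_lift hornerZ horner_prod; congr (_ * _); apply: eq_bigr => j _;
  rewrite hornerXsubC.
Qed.

Theorem mainTheorem5 (R : realType) (N : nat) (lam : 'I_N.+1 -> R)
    (gam : 'I_N.+1 -> R[i]) :
  (1 <= N)%N ->
  (forall i, 0 < lam i) ->
  injective gam ->
  [/\ poly_map_of_degree (jnr_lift lam gam) N,
      full_map (jnr_lift lam gam) &
      forall eta zeta : R[i], eta != 0 ->
        herm (lift_eval (jnr_lift lam gam) (- (eta^*)^-1))
             (lift_eval (jnr_lift lam gam) zeta)
        = (-1) ^+ N / eta ^+ N * jnr_p lam gam eta zeta].
Proof.
move=> _ lpos ginj.
have lnz i : (lam i)%:C != 0.
  by apply/eqP => -[] h; move: (lpos i); rewrite h lt0r eqxx.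
have sizeQ i : size (jnr_lift lam gam i) = N.+1.
  by rewrite /jnr_lift size_scale // size_P.
split.
- split; first by move=> i; rewrite sizeQ.
  split; first by exists ord0; rewrite sizeQ.
  move=> z.
  pose k := if [pick j | gam j == z] is Some j then j else ord0.
  exists k; rewrite eval_lift mulf_neq0 //.
  rewrite prodf_seq_neq0; apply/allP => j _; apply/implyP => jk.
  rewrite subr_eq0; apply/eqP => zj; move: jk; rewrite /k.
  case: pickP => [j' /eqP gj'|/(_ j)]; last by rewrite zj eqxx.
  by rewrite -gj' in zj; rewrite (ginj _ _ zj) eqxx.
- move=> a Ha k.
  have := Ha (gam k).
  rewrite (bigD1 k) //= big1 ?addr0; last first.
    move=> i ik; rewrite eval_lift (bigD1 k) //= ?subrr ?mul0r ?mulr0 //.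
    by rewrite eq_sym.
  move/eqP; rewrite mulf_eq0 => /orP[/eqP //|].
  rewrite eval_lift mulf_eq0 (negbTE (lnz k)) /=.
  rewrite prodf_seq_eq0 => /hasP[j _ /andP[jk]].
  by rewrite subr_eq0 => /eqP /ginj jk'; rewrite jk' eqxx in jk.
- move=> eta zeta etanz.
  rewrite /herm /jnr_p mulr_sumr; apply: eq_bigr => i _.
  rewrite /lift_eval !eval_lift.
  have cM : forall x y : R[i], Num.conj (x * y) = Num.conj x * Num.conj y by move=> x y; exact: rmorphM.
  have c1 : Num.conj (1 : R[i]) = 1 by exact: rmorph1.
  have cB : forall x y : R[i], Num.conj (x - y) = Num.conj x - Num.conj y by move=> x y; exact: rmorphB.
  have cN : forall x : R[i], Num.conj (- x) = - Num.conj x by move=> x; exact: rmorphN.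
  have cV : forall x : R[i], Num.conj (x^-1) = (Num.conj x)^-1 by move=> x; exact: fmorphV.
  rewrite cM (big_morph _ cM c1).
  have -> : Num.conj ((lam i)%:C) = (lam i)%:C.
  by apply/eqP; rewrite -CrealE ger0_real // ler0c le0r lpos orbT.
  rewrite (eq_bigr (fun j => (- eta^-1) * (1 + eta * (gam j)^*))); last first.
    move=> j _; rewrite cB cN cV conjCK.
    by rewrite mulrDr mulr1 mulrA mulNr mulVf // mulN1r.
  rewrite big_split /= prodr_const card_neq.
  rewrite [in RHS]big_split /=.
  set A := \prod_(j < N.+1 | j != i) (1 + eta * (gam j)^*).
  set B := \prod_(j < N.+1 | j != i) (zeta - gam j).
  have E : forall x : R[i], (- x^-1)^+N = (-1)^+N * (x^+N)^-1.
    by move=> x; rewrite -[- x^-1]mulN1r exprMn; congr (_ * _); exact: exprVn.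
  rewrite E.
  have XN : eta ^+ N != 0 by exact: expf_neq0.
  move: XN; set X := eta ^+ N; set Y := (-1) ^+ N => XN.
  by field.
Qed.
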